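(* Fix any configuration of open and closed sites on $\mathcal{L}$, and let $\tau=\inf\{n\ge0:\xi_n=\emptyset\}$. Then $$\tau=\inf\{m\ge0:\underline{\ell}_m>\overline{u}_m\}.$$
   Context: Let $\mathcal{L}=\{(n,m)\in\mathbb{Z}^2:n\ge0,\ n+m\text{ even}\}$. Each site of $\mathcal{L}$ is open or closed. For $z,z'\in\mathcal{L}$ write $z\to z'$ if there exist $k\ge0$ and sites $z=z_0,\dots,z_k=z'$ of $\mathcal{L}$ such that $z_0,\dots,z_{k-1}$ are open and $z_{i+1}-z_i\in\{(1,1),(2,0),(1,-1)\}$ for every $i$. Let $o=(0,0)$. Use the conventions $\sup\emptyset=-\infty$ and $\inf\emptyset=+\infty$. Define $\xi_n=\{x:o\to(n,x)\}$. Set $\overline{u}_0=\underline{\ell}_0=0$. For $n\ge1$, let $$\overline{\xi}_n=\{x:\exists y\le0\text{ such that }(0,y)\to(n,x)\text{ or }(1,y)\to(n,x)\}$$ and $\overline{u}_n=\sup\overline{\xi}_n$. Let $$\underline{\xi}_n=\{x:\exists y\ge0\text{ such that }(0,y)\to(n,x)\text{ or }(1,y)\to(n,x)\}$$ and $\underline{\ell}_n=\inf\underline{\xi}_n$. In all these definitions only sites of $\mathcal{L}$ are considered. *)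

(* Defs.v *)
From Stdlib Require Import ZArith ClassicalEpsilon.
Open Scope Z_scope.

Definition inL (z : Z * Z) : Prop := 0 <= fst z /\ Z.Even (fst z + snd z).

Definition step (z w : Z * Z) : Prop :=
  w = (fst z + 1, snd z + 1) \/ w = (fst z + 2, snd z) \/ w = (fst z + 1, snd z - 1).

(* A configuration: open z = true iff site z is open. *)
Definition config := Z * Z -> bool.

Inductive reach (om : config) : Z * Z -> Z * Z -> Prop :=
| reach_refl z : inL z -> reach om z z
| reach_step z w z' : inL z -> om z = true -> step z w -> reach om w z' -> reach om z z'.

Inductive zbar := ZNinf | ZFin (x : Z) | ZPinf.

Definition zlt (a b : zbar) : Prop :=
  match a, b with
  | ZNinf, ZNinf => False
  | ZNinf, _ => True
  | ZFin x, ZFin y => x < y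
  | ZFin _, ZPinf => True
  | ZFin _, ZNinf => False
  | ZPinf, _ => False
  end.

Definition zsup (A : Z -> Prop) : zbar :=
  match excluded_middle_informative (exists x, A x) with
  | right _ => ZNinf
  | left _ =>
    match excluded_middle_informative (exists b, forall x, A x -> x <= b) with
    | right _ => ZPinf
    | left _ => ZFin (epsilon (inhabits 0) (fun x => A x /\ forall y, A y -> y <= x))
    end
  end.

Definition zinf (A : Z -> Prop) : zbar :=
  match excluded_middle_informative (exists x, A x) with
  | right _ => ZPinf
  | left _ =>
    match excluded_middle_informative (exists b, forall x, A x -> b <= x) with
    | right _ => ZNinf
    | left _ => ZFin (epsilon (inhabits 0) (fun x => A x /\ forall y, A y -> x <= y))
    end
  end.

(* inf of a set of naturals in nat ∪ {+oo} (None = +oo), inf ∅ = +oo. *)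
Definition nat_inf (P : nat -> Prop) : option nat :=
  match excluded_middle_informative (exists n, P n) with
  | right _ => None
  | left _ => Some (epsilon (inhabits 0%nat) (fun n => P n /\ forall k, P k -> (n <= k)%nat))
  end.

Definition xi (om : config) (n : nat) : Z -> Prop :=
  fun x => reach om (0, 0) (Z.of_nat n, x).

Definition xi_up (om : config) (n : nat) : Z -> Prop :=
  fun x => exists y, y <= 0 /\
    (reach om (0, y) (Z.of_nat n, x) \/ reach om (1, y) (Z.of_nat n, x)).

Definition xi_low (om : config) (n : nat) : Z -> Prop :=
  fun x => exists y, 0 <= y /\
    (reach om (0, y) (Z.of_nat n, x) \/ reach om (1, y) (Z.of_nat n, x)).

Definition u_up (om : config) (n : nat) : zbar :=
  match n with O => ZFin 0 | _ => zsup (xi_up om n) end.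

Definition l_low (om : config) (n : nat) : zbar :=
  match n with O => ZFin 0 | _ => zinf (xi_low om n) end.

Definition tau (om : config) : option nat :=
  nat_inf (fun n => forall x, ~ xi om n x).

(* Main.v *)
Require Import Defs.
From Stdlib Require Import ZArith Lia Classical ClassicalEpsilon.
Open Scope Z_scope.

Ltac par := repeat match goal with
 | H : Z.Even _ |- _ => destruct H
 | H : Z.Odd _ |- _ => destruct H end; lia.

Ltac cases_leb := repeat match goal with
 | |- context [Z.leb ?a ?b] => destruct (Z.leb_spec a b)
 | H : context [Z.leb ?a ?b] |- _ => destruct (Z.leb_spec a b) end.

Lemma reach_inL1 om z z' : reach om z z' -> inL z.
Proof. intro H; inversion H; auto. Qed.

Lemma reach_col om z z' : reach om z z' -> fst z <= fst z'.
Proof.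
  induction 1 as [z Hz | z w z' Hz Ho Hs Hr IH]; [lia|].
  destruct Hs as [E|[E|E]]; subst w; simpl in *; lia.
Qed.

Lemma reach_trans om z w z' : reach om z w -> reach om w z' -> reach om z z'.
Proof.
  induction 1 as [z Hz | z w0 w1 Hz Ho Hs Hr IH]; intros H; auto.
  eapply reach_step; eauto.
Qed.

Lemma path_fun om z z' : reach om z z' -> exists g : Z -> Z,
  g (fst z) = snd z /\ g (fst z') = snd z' /\ fst z <= fst z' /\
  (forall k, fst z <= k < fst z' -> g k - 1 <= g (k+1) <= g k + 1) /\
  (forall k, fst z <= k <= fst z' -> Z.Odd (k + g k) ->
      fst z < k < fst z' /\ g (k-1) = g k /\ g (k+1) = g k) /\
  (forall k, fst z <= k <= fst z' -> Z.Even (k + g k) -> reach om z (k, g k)).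
Proof.
  induction 1 as [z Hz | z w z' Hz Ho Hs Hr IH].
  - exists (fun _ => snd z).
    refine (conj eq_refl (conj eq_refl (conj (Z.le_refl _) (conj _ (conj _ _))))).
    + intros; lia.
    + intros k Hk Hodd. exfalso. destruct Hz as [_ He].
      replace k with (fst z) in Hodd by lia. par.
    + intros k Hk _. replace (k, snd z) with z. apply reach_refl; auto.
      destruct z; simpl in *; f_equal; lia.
  - destruct IH as [g [H1 [H2 [H3 [H4 [H5 H6]]]]]].
    pose proof Hz as HzL. destruct HzL as [_ Hez].
    assert (Hst := Hs).
    destruct Hs as [E|[E|E]]; subst w; simpl in *.
    + exists (fun k => if k <=? fst z then snd z else g k).
      refine (conj _ (conj _ (conj _ (conj _ (conj _ _))))).
      * cases_leb; lia.
      * cases_leb; lia.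
      * lia.
      * intros k Hk. cases_leb; try lia.
        assert (k = fst z) by lia. subst k. rewrite H1. lia.
        apply H4; lia.
      * intros k Hk Hodd. destruct (Z.leb_spec k (fst z)).
        -- exfalso. replace k with (fst z) in Hodd by lia. par.
        -- destruct (H5 k ltac:(lia) Hodd) as [A [B C]]. cases_leb; lia.
      * intros k Hk Hev. cases_leb.
        -- replace (k, snd z) with z. apply reach_refl; auto.
           destruct z; simpl in *; f_equal; lia.
        -- eapply reach_step; eauto. apply H6; auto; lia.
    + exists (fun k => if k <=? fst z + 1 then snd z else g k).
      refine (conj _ (conj _ (conj _ (conj _ (conj _ _))))).
      * cases_leb; lia.
      * cases_leb; lia.
      * lia.
      * intros k Hk. cases_leb; try lia.
        assert (k = fst z + 1) by lia. subst k.
        replace (fst z + 1 + 1) with (fst z + 2) by ring. rewrite H1. lia.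
        apply H4; lia.
      * intros k Hk Hodd. destruct (Z.leb_spec k (fst z + 1)).
        -- destruct (Z.eq_dec k (fst z)) as [Ek|Ek].
           ++ exfalso. rewrite Ek in Hodd. par.
           ++ assert (k = fst z + 1) by lia. subst k.
              replace (fst z + 1 + 1) with (fst z + 2) by ring. rewrite H1. cases_leb; lia.
        -- destruct (H5 k ltac:(lia) Hodd) as [A [B C]]. cases_leb; lia.
      * intros k Hk Hev. cases_leb.
        -- destruct (Z.eq_dec k (fst z)) as [Ek|Ek].
           ++ replace (k, snd z) with z. apply reach_refl; auto.
              destruct z; simpl in *; f_equal; lia.
           ++ exfalso. assert (k = fst z + 1) by lia. subst k. par.
        -- eapply reach_step; eauto. apply H6; auto; lia.
    + exists (fun k => if k <=? fst z then snd z else g k).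
      refine (conj _ (conj _ (conj _ (conj _ (conj _ _))))).
      * cases_leb; lia.
      * cases_leb; lia.
      * lia.
      * intros k Hk. cases_leb; try lia.
        assert (k = fst z) by lia. subst k. rewrite H1. lia.
        apply H4; lia.
      * intros k Hk Hodd. destruct (Z.leb_spec k (fst z)).
        -- exfalso. replace k with (fst z) in Hodd by lia. par.
        -- destruct (H5 k ltac:(lia) Hodd) as [A [B C]]. cases_leb; lia.
      * intros k Hk Hev. cases_leb.
        -- replace (k, snd z) with z. apply reach_refl; auto.
           destruct z; simpl in *; f_equal; lia.
        -- eapply reach_step; eauto. apply H6; auto; lia.
Qed.

Section Sep.
Variables (om : config) (g : Z -> Z) (N : Z).
Hypothesis HN : 0 <= N.
Hypothesis HG2 : forall k, 0 <= k < N -> g k - 1 <= g (k+1) <= g k + 1.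
Hypothesis HG3 : forall k, 0 <= k <= N -> Z.Odd (k + g k) -> 0 < k < N /\ g (k-1) = g k /\ g (k+1) = g k.
Hypothesis HG4 : forall k, 0 <= k <= N -> Z.Even (k + g k) -> reach om (0,0) (k, g k).

Lemma below z z' : reach om z z' -> fst z' = N + 1 -> ~ reach om (0,0) z' -> 0 <= fst z ->
  snd z < g (Z.min (fst z) N) -> snd z' < g N.
Proof.
  induction 1 as [z Hz | z w z' Hz Ho Hs Hr IH]; intros Hf Hno H0 Hb.
  - rewrite Hf in Hb. replace (Z.min (N+1) N) with N in Hb by lia. exact Hb.
  - assert (Hw := reach_inL1 _ _ _ Hr). assert (Hc := reach_col _ _ _ Hr).
    assert (Hnw : ~ reach om (0,0) w) by (intro H; apply Hno; eapply reach_trans; eauto).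
    destruct z as [k x]; destruct Hz as [_ Hez]; simpl in *.
    assert (Hk : k <= N) by (destruct Hs as [E|[E|E]]; subst w; simpl in Hc; lia).
    replace (Z.min k N) with k in Hb by lia.
    assert (F : k < N -> x + 1 <= g (k+1)).
    { intro Hk'. destruct (Z.Even_or_Odd (k + g k)) as [He|Hod].
      - pose proof (HG2 k ltac:(lia)). par.
      - destruct (HG3 k ltac:(lia) Hod) as [_ [_ E]]. lia. }
    assert (F' : k = N -> x + 2 <= g N).
    { intro Ek. subst k. destruct (Z.Even_or_Odd (N + g N)) as [He|Hod].
      - par.
      - destruct (HG3 N ltac:(lia) Hod) as [A _]. lia. }
    destruct Hw as [_ Hew].
    apply IH; auto; destruct Hs as [E|[E|E]]; subst w; simpl in *; try lia.
    + destruct (Z_lt_le_dec k N).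
      * replace (Z.min (k+1) N) with (k+1) by lia. specialize (F l).
        destruct (Z.eq_dec (g (k+1)) (x+1)) as [E|E]; [|lia].
        exfalso; apply Hnw. rewrite <- E. apply HG4; [lia|]. rewrite E; exact Hew.
      * replace (Z.min (k+1) N) with N by lia. specialize (F' ltac:(lia)). lia.
    + destruct (Z_lt_le_dec (k+2) (N+1)).
      * replace (Z.min (k+2) N) with (k+2) by lia. specialize (F ltac:(lia)).
        pose proof (HG2 (k+1) ltac:(lia)) as G. replace (k+1+1) with (k+2) in G by ring.
        destruct (Z.eq_dec (g (k+2)) x) as [E|E]; [|lia].
        exfalso; apply Hnw. rewrite <- E. apply HG4; [lia|]. rewrite E; exact Hew.
      * replace (Z.min (k+2) N) with (k+1) by lia. specialize (F ltac:(lia)). lia.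
    + destruct (Z_lt_le_dec k N).
      * replace (Z.min (k+1) N) with (k+1) by lia. specialize (F l). lia.
      * replace (Z.min (k+1) N) with N by lia. specialize (F' ltac:(lia)). lia.
Qed.

Lemma above z z' : reach om z z' -> fst z' = N + 1 -> ~ reach om (0,0) z' -> 0 <= fst z ->
  g (Z.min (fst z) N) < snd z -> g N < snd z'.
Proof.
  induction 1 as [z Hz | z w z' Hz Ho Hs Hr IH]; intros Hf Hno H0 Hb.
  - rewrite Hf in Hb. replace (Z.min (N+1) N) with N in Hb by lia. exact Hb.
  - assert (Hw := reach_inL1 _ _ _ Hr). assert (Hc := reach_col _ _ _ Hr).
    assert (Hnw : ~ reach om (0,0) w) by (intro H; apply Hno; eapply reach_trans; eauto).
    destruct z as [k x]; destruct Hz as [_ Hez]; simpl in *.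
    assert (Hk : k <= N) by (destruct Hs as [E|[E|E]]; subst w; simpl in Hc; lia).
    replace (Z.min k N) with k in Hb by lia.
    assert (F : k < N -> g (k+1) <= x - 1).
    { intro Hk'. destruct (Z.Even_or_Odd (k + g k)) as [He|Hod].
      - pose proof (HG2 k ltac:(lia)). par.
      - destruct (HG3 k ltac:(lia) Hod) as [_ [_ E]]. lia. }
    assert (F' : k = N -> g N <= x - 2).
    { intro Ek. subst k. destruct (Z.Even_or_Odd (N + g N)) as [He|Hod].
      - par.
      - destruct (HG3 N ltac:(lia) Hod) as [A _]. lia. }
    destruct Hw as [_ Hew].
    apply IH; auto; destruct Hs as [E|[E|E]]; subst w; simpl in *; try lia.
    + destruct (Z_lt_le_dec k N).
      * replace (Z.min (k+1) N) with (k+1) by lia. specialize (F l). lia.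
      * replace (Z.min (k+1) N) with N by lia. specialize (F' ltac:(lia)). lia.
    + destruct (Z_lt_le_dec (k+2) (N+1)).
      * replace (Z.min (k+2) N) with (k+2) by lia. specialize (F ltac:(lia)).
        pose proof (HG2 (k+1) ltac:(lia)) as G. replace (k+1+1) with (k+2) in G by ring.
        destruct (Z.eq_dec (g (k+2)) x) as [E|E]; [|lia].
        exfalso; apply Hnw. rewrite <- E. apply HG4; [lia|]. rewrite E; exact Hew.
      * replace (Z.min (k+2) N) with (k+1) by lia. specialize (F ltac:(lia)). lia.
    + destruct (Z_lt_le_dec k N).
      * replace (Z.min (k+1) N) with (k+1) by lia. specialize (F l).
        destruct (Z.eq_dec (g (k+1)) (x-1)) as [E|E]; [|lia].
        exfalso; apply Hnw. rewrite <- E. apply HG4; [lia|]. rewrite E; exact Hew.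
      * replace (Z.min (k+1) N) with N by lia. specialize (F' ltac:(lia)). lia.
Qed.
End Sep.

Lemma zmax_ex (A : Z -> Prop) x b : A x -> (forall y, A y -> y <= b) ->
  exists m, A m /\ forall y, A y -> y <= m.
Proof.
  intros Ax Hb.
  assert (K : forall n : nat, forall x, A x -> b - x <= Z.of_nat n ->
            exists m, A m /\ forall y, A y -> y <= m).
  { induction n; intros x0 Ax0 Hn.
    - exists x0; split; auto. intros y Ay. specialize (Hb y Ay). lia.
    - destruct (classic (exists y, A y /\ x0 < y)) as [[y [Ay Hy]]|Hn'].
      + apply (IHn y Ay). lia.
      + exists x0; split; auto. intros y Ay.
        destruct (Z_le_gt_dec y x0); auto. exfalso; apply Hn'; exists y; split; auto; lia. }
  apply (K (Z.to_nat (b - x)) x Ax). specialize (Hb x Ax). lia.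
Qed.

Lemma zmin_ex (A : Z -> Prop) x b : A x -> (forall y, A y -> b <= y) ->
  exists m, A m /\ forall y, A y -> m <= y.
Proof.
  intros Ax Hb.
  destruct (zmax_ex (fun y => A (- y)) (- x) (- b)) as [m [Am Hm]].
  - rewrite Z.opp_involutive; auto.
  - intros y Ay. specialize (Hb _ Ay). lia.
  - exists (- m); split; auto. intros y Ay. specialize (Hm (- y)).
    rewrite Z.opp_involutive in Hm. specialize (Hm Ay). lia.
Qed.

Lemma zsup_spec (A : Z -> Prop) :
  (zsup A = ZNinf /\ forall x, ~ A x) \/
  (exists s, zsup A = ZFin s /\ A s /\ forall y, A y -> y <= s) \/
  (zsup A = ZPinf /\ ~ exists b, forall x, A x -> x <= b).
Proof.
  unfold zsup.
  destruct (excluded_middle_informative (exists x, A x)) as [[x Ax]|Hn].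
  - destruct (excluded_middle_informative (exists b, forall x, A x -> x <= b)) as [[b Hb]|Hn].
    + right; left. eexists; split; [reflexivity|].
      apply epsilon_spec. eapply zmax_ex; eauto.
    + right; right; auto.
  - left; split; auto. intros x Ax; apply Hn; eauto.
Qed.

Lemma zinf_spec (A : Z -> Prop) :
  (zinf A = ZPinf /\ forall x, ~ A x) \/
  (exists s, zinf A = ZFin s /\ A s /\ forall y, A y -> s <= y) \/
  (zinf A = ZNinf /\ ~ exists b, forall x, A x -> b <= x).
Proof.
  unfold zinf.
  destruct (excluded_middle_informative (exists x, A x)) as [[x Ax]|Hn].
  - destruct (excluded_middle_informative (exists b, forall x, A x -> b <= x)) as [[b Hb]|Hn].
    + right; left. eexists; split; [reflexivity|].
      apply epsilon_spec. eapply zmin_ex; eauto.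
    + right; right; auto.
  - left; split; auto. intros x Ax; apply Hn; eauto.
Qed.

Lemma nat_min_ex (P : nat -> Prop) : (exists n, P n) -> exists m, P m /\ forall k, P k -> (m <= k)%nat.
Proof.
  intros [n Hn].
  assert (K : forall n j, (j <= n)%nat -> P j -> exists m, P m /\ forall k, P k -> (m <= k)%nat).
  { induction n0; intros j Hj Pj.
    - exists j; split; auto; intros; lia.
    - destruct (classic (exists k, (k < j)%nat /\ P k)) as [[k [Hk Pk]]|Hn'].
      + apply (IHn0 k); auto; lia.
      + exists j; split; auto. intros k Pk.
        destruct (Nat.le_gt_cases j k); auto. exfalso; apply Hn'; eauto. }
  eapply K; eauto.
Qed.

Lemma nat_inf_some (P : nat -> Prop) m : P m -> (forall k, P k -> (m <= k)%nat) -> nat_inf P = Some m.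
Proof.
  intros Pm Hm. unfold nat_inf.
  destruct (excluded_middle_informative (exists n, P n)) as [He|Hn].
  - f_equal. destruct (epsilon_spec (inhabits 0%nat) (fun n => P n /\ forall k, P k -> (n <= k)%nat))
      as [A B]; [exists m; auto|].
    specialize (B m Pm). specialize (Hm _ A). lia.
  - exfalso; eauto.
Qed.

Lemma nat_inf_none (P : nat -> Prop) : (forall n, ~ P n) -> nat_inf P = None.
Proof.
  intros H. unfold nat_inf.
  destruct (excluded_middle_informative (exists n, P n)) as [[n Hn]|Hn]; auto.
  exfalso; eapply H; eauto.
Qed.

Lemma easy om n x : xi om n x -> ~ zlt (u_up om n) (l_low om n).
Proof.
  intros Hx. destruct n as [|n]; simpl; [lia|].
  assert (Au : xi_up om (S n) x) by (exists 0; split; [lia|left; exact Hx]).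
  assert (Al : xi_low om (S n) x) by (exists 0; split; [lia|left; exact Hx]).
  destruct (zsup_spec (xi_up om (S n))) as [[E1 H1]|[[s [E1 [H1 H1']]]|[E1 H1]]];
  destruct (zinf_spec (xi_low om (S n))) as [[E2 H2]|[[t [E2 [H2 H2']]]|[E2 H2]]];
  rewrite ?E1, ?E2; simpl; try tauto;
  try (exfalso; eapply H1; eauto); try (exfalso; eapply H2; eauto).
  specialize (H1' _ Au). specialize (H2' _ Al). lia.
Qed.

Lemma hard om t c : (forall x, ~ xi om (S t) x) -> reach om (0,0) (Z.of_nat t, c) ->
  zlt (u_up om (S t)) (l_low om (S t)).
Proof.
  intros Hd Hc.
  destruct (path_fun _ _ _ Hc) as [g [H1 [H2 [H3 [H4 [H5 H6]]]]]]; simpl in *.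
  set (N := Z.of_nat t) in *.
  assert (HN : 0 <= N) by lia.
  assert (HG2 : forall k, 0 <= k < N -> g k - 1 <= g (k+1) <= g k + 1) by auto.
  assert (HG3 : forall k, 0 <= k <= N -> Z.Odd (k + g k) -> 0 < k < N /\ g (k-1) = g k /\ g (k+1) = g k) by auto.
  assert (HG4 : forall k, 0 <= k <= N -> Z.Even (k + g k) -> reach om (0,0) (k, g k)) by auto.
  assert (Hcol : Z.of_nat (S t) = N + 1) by (unfold N; lia).
  assert (U : forall a, xi_up om (S t) a -> a < c).
  { intros a [y [Hy Hr]]. rewrite <- H2.
    assert (Hno : ~ reach om (0,0) (Z.of_nat (S t), a)) by exact (Hd a).
    assert (Hinit : forall s, reach om s (Z.of_nat (S t), a) -> ~ reach om (0,0) s)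
      by (intros s Hs Ho; apply Hno; eapply reach_trans; eauto).
    destruct Hr as [Hr|Hr]; eapply (below om g N HN HG2 HG3 HG4 _ _ Hr); simpl; auto; try lia.
    - replace (Z.min 0 N) with 0 by lia. rewrite H1.
      destruct (reach_inL1 _ _ _ Hr) as [_ He]. cbn [fst snd] in He.
      destruct (Z.eq_dec y 0) as [E|E]; [|par].
      subst y. exfalso. apply (Hinit _ Hr). apply reach_refl. split; simpl; [lia|exists 0; reflexivity].
    - destruct (reach_inL1 _ _ _ Hr) as [_ He]. cbn [fst snd] in He.
      destruct (Z.eq_dec N 0) as [E|E].
      + replace (Z.min 1 N) with 0 by lia. rewrite H1. par.
      + replace (Z.min 1 N) with 1 by lia.
        pose proof (HG2 0 ltac:(lia)) as G. simpl in G. rewrite H1 in G.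
        destruct (Z.eq_dec (g 1) (-1)) as [E1|E1]; [|par].
        assert (R1 : reach om (0,0) (1, -1)).
        { rewrite <- E1. apply HG4; [lia|]. rewrite E1. exists 0; reflexivity. }
        destruct (Z.eq_dec y (-1)) as [E2|E2]; [|par].
        subst y. exfalso. exact (Hinit _ Hr R1). }
  assert (L : forall b, xi_low om (S t) b -> c < b).
  { intros b [y [Hy Hr]]. rewrite <- H2.
    assert (Hno : ~ reach om (0,0) (Z.of_nat (S t), b)) by exact (Hd b).
    assert (Hinit : forall s, reach om s (Z.of_nat (S t), b) -> ~ reach om (0,0) s)
      by (intros s Hs Ho; apply Hno; eapply reach_trans; eauto).
    destruct Hr as [Hr|Hr]; eapply (above om g N HN HG2 HG3 HG4 _ _ Hr); simpl; auto; try lia.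
    - replace (Z.min 0 N) with 0 by lia. rewrite H1.
      destruct (reach_inL1 _ _ _ Hr) as [_ He]. cbn [fst snd] in He.
      destruct (Z.eq_dec y 0) as [E|E]; [|par].
      subst y. exfalso. apply (Hinit _ Hr). apply reach_refl. split; simpl; [lia|exists 0; reflexivity].
    - destruct (reach_inL1 _ _ _ Hr) as [_ He]. cbn [fst snd] in He.
      destruct (Z.eq_dec N 0) as [E|E].
      + replace (Z.min 1 N) with 0 by lia. rewrite H1. par.
      + replace (Z.min 1 N) with 1 by lia.
        pose proof (HG2 0 ltac:(lia)) as G. simpl in G. rewrite H1 in G.
        destruct (Z.eq_dec (g 1) 1) as [E1|E1]; [|par].
        assert (R1 : reach om (0,0) (1, 1)).
        { replace (1,1) with (1, g 1) by (rewrite E1; reflexivity). apply HG4; [lia|]. rewrite E1. exists 1; reflexivity. }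
        destruct (Z.eq_dec y 1) as [E2|E2]; [|par].
        subst y. exfalso. exact (Hinit _ Hr R1). }
  simpl.
  destruct (zsup_spec (xi_up om (S t))) as [[E1 G1]|[[s [E1 [G1 G1']]]|[E1 G1]]];
  destruct (zinf_spec (xi_low om (S t))) as [[E2 G2]|[[r [E2 [G2 G2']]]|[E2 G2]]];
  rewrite ?E1, ?E2; simpl; auto;
  try (exfalso; apply G1; exists c; intros x Hx; specialize (U x Hx); lia);
  try (exfalso; apply G2; exists c; intros x Hx; specialize (L x Hx); lia).
  specialize (U s G1). specialize (L r G2). lia.
Qed.

Theorem lemma2p1 (om : config) :
  tau om = nat_inf (fun m => zlt (u_up om m) (l_low om m)).
Proof.
  unfold tau.
  destruct (classic (exists n, forall x, ~ xi om n x)) as [He|Hn].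
  - destruct (nat_min_ex _ He) as [m [Pm Hm]].
    rewrite (nat_inf_some _ m Pm Hm). symmetry.
    destruct m as [|t].
    + exfalso. apply (Pm 0). apply reach_refl. split; simpl; [lia|exists 0; reflexivity].
    + apply nat_inf_some.
      * destruct (classic (exists c, xi om t c)) as [[c Hc]|Hnc].
        -- exact (hard om t c Pm Hc).
        -- assert (Ht : forall x, ~ xi om t x) by (intros x Hx; apply Hnc; eauto).
           specialize (Hm t Ht). lia.
      * intros k Hk. destruct (Nat.le_gt_cases (S t) k); auto.
        destruct (classic (exists x, xi om k x)) as [[x Hx]|Hnx].
        -- exfalso. exact (easy om k x Hx Hk).
        -- assert (Hk' : forall x, ~ xi om k x) by (intros x Hx; apply Hnx; eauto).
           specialize (Hm k Hk'). lia.
  - rewrite !nat_inf_none; auto.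
    + intros n Hz. apply Hn. exists n. intros x Hx. exact (easy om n x Hx Hz).
    + intros n Hz. apply Hn; eauto.
Qed.
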